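(* Let $T=(A_1;A_2;\dots;A_p)$ be an $n\times p\times n$ quaternion tensor whose first frontal slice $A_1\in M_n(\mathbb{H})$ is invertible. Then $\mathrm{rank}(T)=n$ if and only if the matrices $A_jA_1^{-1}$, $j=2,\dots,p$, are simultaneously diagonalizable, i.e. there is an invertible $P\in M_n(\mathbb{H})$ such that $P^{-1}A_jA_1^{-1}P$ is a diagonal (quaternion) matrix for every $j=2,\dots,p$.
   Context: $\mathbb{H}$ denotes the real quaternions. An $n_1\times n_2\times n_3$ quaternion tensor is an array $T=(T_{ijk})$ with entries in $\mathbb{H}$, $1\le i\le n_1$, $1\le j\le n_2$, $1\le k\le n_3$; it is written $T=(A_1;\dots;A_{n_2})$ where the frontal slice $A_j$ is the $n_1\times n_3$ matrix $(T_{ijk})_{i,k}$. A nonzero tensor is simple if $T_{ijk}=a_ib_jc_k$ (quaternion product in this order) for some $\vec a\in\mathbb{H}^{n_1},\vec b\in\mathbb{H}^{n_2},\vec c\in\mathbb{H}^{n_3}$. The rank of $T$ is the least number of simple tensors summing to $T$. *)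

(* Defs.v *)
(* real quaternions over an abstract realType R
   (any realType is a complete archimedean ordered field, i.e. a copy of the reals). *)
From HB Require Import structures.
From mathcomp Require Import all_boot all_order all_algebra.
From mathcomp Require Import reals.
From mathcomp Require Import ring.
Set Implicit Arguments. Unset Strict Implicit. Unset Printing Implicit Defensive.
Import Order.TTheory GRing.Theory Num.Theory.
Local Open Scope ring_scope.

Section Quaternions.
Variable R : realType.

(* q = q0 + q1 i + q2 j + q3 k *)
Record quat := Quat { q0 : R; q1 : R; q2 : R; q3 : R }.

Definition quat_to (q : quat) : R * R * R * R := (q0 q, q1 q, q2 q, q3 q).
Definition quat_of (t : R * R * R * R) : quat :=
  let: (a, b, c, d) := t in Quat a b c d.
Lemma quat_toK : cancel quat_to quat_of. Proof. by case. Qed.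

HB.instance Definition _ := Equality.copy quat (can_type quat_toK).
HB.instance Definition _ := Choice.copy quat (can_type quat_toK).

Definition qzero := Quat 0 0 0 0.
Definition qone := Quat 1 0 0 0.
Definition qadd (p q : quat) :=
  Quat (q0 p + q0 q) (q1 p + q1 q) (q2 p + q2 q) (q3 p + q3 q).
Definition qopp (p : quat) := Quat (- q0 p) (- q1 p) (- q2 p) (- q3 p).
(* Hamilton product: i^2 = j^2 = k^2 = ijk = -1 *)
Definition qmul (p q : quat) :=
  Quat (q0 p * q0 q - q1 p * q1 q - q2 p * q2 q - q3 p * q3 q)
       (q0 p * q1 q + q1 p * q0 q + q2 p * q3 q - q3 p * q2 q)
       (q0 p * q2 q - q1 p * q3 q + q2 p * q0 q + q3 p * q1 q)
       (q0 p * q3 q + q1 p * q2 q - q2 p * q1 q + q3 p * q0 q).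

Lemma qaddA : associative qadd.
Proof. by move=> [? ? ? ?] [? ? ? ?] [? ? ? ?]; rewrite /qadd /=; congr Quat; ring. Qed.
Lemma qaddC : commutative qadd.
Proof. by move=> [? ? ? ?] [? ? ? ?]; rewrite /qadd /=; congr Quat; ring. Qed.
Lemma qadd0 : left_id qzero qadd.
Proof. by move=> [? ? ? ?]; rewrite /qadd /=; congr Quat; ring. Qed.
Lemma qaddN : left_inverse qzero qopp qadd.
Proof. by move=> [? ? ? ?]; rewrite /qadd /=; congr Quat; ring. Qed.

HB.instance Definition _ := GRing.isZmodule.Build quat qaddA qaddC qadd0 qaddN.

Lemma qmulA : associative qmul.
Proof. by move=> [? ? ? ?] [? ? ? ?] [? ? ? ?]; rewrite /qmul /=; congr Quat; ring. Qed.
Lemma qmul1 : left_id qone qmul.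
Proof. by move=> [? ? ? ?]; rewrite /qmul /qone /=; congr Quat; ring. Qed.
Lemma qmulr1 : right_id qone qmul.
Proof. by move=> [? ? ? ?]; rewrite /qmul /qone /=; congr Quat; ring. Qed.
Lemma qmulDl : left_distributive qmul qadd.
Proof.
by move=> [? ? ? ?] [? ? ? ?] [? ? ? ?]; rewrite /qmul /= /qadd /=; congr Quat; ring.
Qed.
Lemma qmulDr : right_distributive qmul qadd.
Proof.
by move=> [? ? ? ?] [? ? ? ?] [? ? ? ?]; rewrite /qmul /= /qadd /=; congr Quat; ring.
Qed.
Lemma qone_neq0 : qone != 0.
Proof. by apply/eqP => -[] /eqP; rewrite oner_eq0. Qed.

HB.instance Definition _ :=
  GRing.Zmodule_isNzRing.Build quat qmulA qmul1 qmulr1 qmulDl qmulDr qone_neq0.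

End Quaternions.

Notation "''H[' R ]" := (quat R) (at level 8, format "''H[' R ]").

Section Tensors.
Variable R : realType.
Local Notation H := (quat R).

Definition tensor (n1 n2 n3 : nat) := 'I_n1 -> 'I_n2 -> 'I_n3 -> H.

Definition simple_tensor n1 n2 n3 (T : tensor n1 n2 n3) : Prop :=
  (exists i j k, T i j k != 0) /\
  exists (a : 'I_n1 -> H) (b : 'I_n2 -> H) (c : 'I_n3 -> H),
    forall i j k, T i j k = a i * b j * c k.

Definition sum_of_simple n1 n2 n3 (T : tensor n1 n2 n3) (r : nat) : Prop :=
  exists S : 'I_r -> tensor n1 n2 n3,
    (forall l, simple_tensor (S l)) /\
    forall i j k, T i j k = \sum_(l < r) S l i j k.

Definition tensor_rank_is n1 n2 n3 (T : tensor n1 n2 n3) (r : nat) : Prop :=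
  sum_of_simple T r /\ forall m, (m < r)%N -> ~ sum_of_simple T m.

Definition frontal_slice n1 n2 n3 (T : tensor n1 n2 n3) (j : 'I_n2) : 'M[H]_(n1, n3) :=
  \matrix_(i < n1, k < n3) T i j k.

Definition mx_inverse_of n (A B : 'M[H]_n) : Prop :=
  A *m B = 1%:M /\ B *m A = 1%:M.

Definition mx_invertible n (A : 'M[H]_n) : Prop := exists B, mx_inverse_of A B.

End Tensors.

(* Main.v *)
Require Import Defs.
From HB Require Import structures.
From mathcomp Require Import all_boot all_order all_algebra.
From mathcomp Require Import reals ring lra.
Import GRing.Theory Num.Theory.
Local Open Scope ring_scope.
Set Implicit Arguments. Unset Strict Implicit.

Section Q.
Variable R : realType.
Local Notation H := (quat R).

Lemma qmulE (x y : H) : x * y = qmul x y. Proof. by []. Qed.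
Lemma qaddE (x y : H) : x + y = qadd x y. Proof. by []. Qed.
Lemma q0E : (0 : H) = Quat 0 0 0 0. Proof. by []. Qed.
Lemma q1E : (1 : H) = Quat 1 0 0 0. Proof. by []. Qed.

Definition Lq (q : H) (a b : 'I_4) : R :=
  match val a, val b with
  | 0, 0 => q0 q | 0, 1 => - q1 q | 0, 2 => - q2 q | 0, _ => - q3 q
  | 1, 0 => q1 q | 1, 1 => q0 q | 1, 2 => - q3 q | 1, _ => q2 q
  | 2, 0 => q2 q | 2, 1 => q3 q | 2, 2 => q0 q | 2, _ => - q1 q
  | _, 0 => q3 q | _, 1 => - q2 q | _, 2 => q1 q | _, _ => q0 q
  end.

Lemma LqM (x y : H) a b : \sum_(c < 4) Lq x a c * Lq y c b = Lq (x * y) a b.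
Proof.
rewrite !big_ord_recl big_ord0 qmulE.
case: x y => x0 x1 x2 x3 [y0 y1 y2 y3].
case: a => [[|[|[|[|a]]]] ha] //; case: b => [[|[|[|[|b]]]] hb] //;
  rewrite /Lq /= ; ring.
Qed.

Lemma LqD (x y : H) a b : Lq (x + y) a b = Lq x a b + Lq y a b.
Proof.
rewrite qaddE; case: x y => x0 x1 x2 x3 [y0 y1 y2 y3].
case: a => [[|[|[|[|a]]]] ha] //; case: b => [[|[|[|[|b]]]] hb] //;
  rewrite /Lq /= ; ring.
Qed.

Lemma Lq0 a b : Lq 0 a b = 0.
Proof.
case: a => [[|[|[|[|a]]]] ha] //; case: b => [[|[|[|[|b]]]] hb] //;
  rewrite /Lq /= ; ring.
Qed.

Lemma Lq1 a b : Lq 1 a b = (a == b)%:R.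
Proof.
case: a => [[|[|[|[|a]]]] ha] //; case: b => [[|[|[|[|b]]]] hb] //;
  rewrite /Lq /= ?oppr0 //.
Qed.

Lemma Lq_inj (x y : H) : (forall a, Lq x a 0 = Lq y a 0) -> x = y.
Proof.
move=> h; case: x y h => x0 x1 x2 x3 [y0 y1 y2 y3] h.
have := h (0 : 'I_4); have := h (1 : 'I_4); have := h (2%:R : 'I_4); have := h (3%:R : 'I_4).
by rewrite /Lq /= => -> -> -> ->.
Qed.

Definition nrm (q : H) := q0 q ^+ 2 + q1 q ^+ 2 + q2 q ^+ 2 + q3 q ^+ 2.

Lemma nrmM (x y : H) : nrm (x * y) = nrm x * nrm y.
Proof. rewrite qmulE; case: x y => x0 x1 x2 x3 [y0 y1 y2 y3]; rewrite /nrm /=; ring. Qed.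

Lemma nrm0 (x : H) : nrm x = 0 -> x = 0.
Proof.
case: x => x0 x1 x2 x3; rewrite /nrm /= => h.
have h0 : x0 = 0 by nra.
have h1 : x1 = 0 by nra.
have h2 : x2 = 0 by nra.
have h3 : x3 = 0 by nra.
by rewrite h0 h1 h2 h3.
Qed.

Lemma qmul_eq0 (x y : H) : x * y = 0 -> x = 0 \/ y = 0.
Proof.
move=> h; have : nrm x * nrm y = 0 by rewrite -nrmM h /nrm /=; ring.
by move/eqP; rewrite mulf_eq0 => /orP [/eqP/nrm0|/eqP/nrm0]; [left|right].
Qed.


Lemma Lq_sum (I : finType) (F : I -> H) a b :
  Lq (\sum_i F i) a b = \sum_i Lq (F i) a b.
Proof. by apply: (big_morph (fun q => Lq q a b)) => [x y|]; rewrite ?LqD ?Lq0. Qed.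

Definition emb n m (A : 'M[H]_(n, m)) : 'M[R]_(#|{: 'I_n * 'I_4}|, #|{: 'I_m * 'I_4}|) :=
  \matrix_(k, l) Lq (A (enum_val k).1 (enum_val l).1) (enum_val k).2 (enum_val l).2.

Lemma embM n m p (A : 'M[H]_(n, m)) (B : 'M[H]_(m, p)) :
  emb (A *m B) = emb A *m emb B.
Proof.
apply/matrixP => k l; rewrite !mxE Lq_sum.
under eq_bigr do rewrite -LqM.
rewrite pair_bigA /= (reindex (@enum_val _ {: 'I_m * 'I_4})) /=.
  by apply: eq_bigr => t _; rewrite !mxE.
by exists enum_rank => t _; [apply: enum_valK | apply: enum_rankK].
Qed.

Lemma emb1 n : emb (1%:M : 'M[H]_n) = 1%:M.
Proof.
apply/matrixP => k l; rewrite !mxE.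
case: (eqVneq k l) => [->|kl]; first by rewrite !eqxx Lq1 eqxx.
have : enum_val k != enum_val l by apply: contra kl => /eqP/enum_val_inj ->.
case: (enum_val k) (enum_val l) => i a [j b] /=.
case: (eqVneq i j) => [->|ij]; rewrite ?Lq0 //.
by rewrite xpair_eqE eqxx /= Lq1 => /negbTE ->.
Qed.

Lemma emb_inj n m (A B : 'M[H]_(n, m)) : emb A = emb B -> A = B.
Proof.
move=> h; apply/matrixP => i j; apply: Lq_inj => a.
move/matrixP: h => /(_ (enum_rank (i, a)) (enum_rank (j, (0 : 'I_4)))).
by rewrite !mxE !enum_rankK.
Qed.

Lemma inv_sym n (A B : 'M[H]_n) : A *m B = 1%:M -> B *m A = 1%:M.
Proof.
move=> h; apply: emb_inj; rewrite embM emb1; apply: mulmx1C.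
by rewrite -embM h emb1.
Qed.

Lemma no_small n m (X : 'M[H]_(n, m)) (Z : 'M[H]_(m, n)) :
  (m < n)%N -> X *m Z = 1%:M -> False.
Proof.
move=> mn h; have := mxrankM_maxl (emb X) (emb Z).
rewrite -embM h emb1 mxrank1 => h2.
have := leq_trans h2 (rank_leq_col _); rewrite !card_prod !card_ord.
by rewrite leq_pmul2r // leqNgt mn.
Qed.

End Q.

Section Main.
Variable R : realType.
Local Notation H := (quat R).

Lemma decomp n1 n2 n3 (T : tensor R n1 n2 n3) m : sum_of_simple T m ->
  exists (X : 'M[H]_(n1, m)) (d : 'I_n2 -> 'rV[H]_m) (Y : 'M[H]_(m, n3)),
    forall j, frontal_slice T j = X *m diag_mx (d j) *m Y.
Proof.
case=> S [hS hsum].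
have : forall l, exists t : (('I_n1 -> H) * ('I_n2 -> H) * ('I_n3 -> H))%type,
    forall i j k, S l i j k = t.1.1 i * t.1.2 j * t.2 k.
  by move=> l; case: (hS l) => _ [a [b [c h]]]; exists (a, b, c).
case/fin_all_exists => f hf.
exists (\matrix_(i, l) (f l).1.1 i), (fun j => \row_l (f l).1.2 j),
  (\matrix_(l, k) (f l).2 k).
move=> j; apply/matrixP => i k.
rewrite mul_mx_diag !mxE hsum; apply: eq_bigr => l _; rewrite !mxE hf.
by [].
Qed.

Lemma mul_diag_entry n m (A : 'M[H]_(n, m)) (D : 'M[H]_m) i l :
  is_diag_mx D -> (A *m D) i l = A i l * D l l.
Proof.
move=> hD; rewrite mxE (bigD1 l) //= big1 ?addr0 // => t tl.
by rewrite (is_diag_mxP hD) ?mulr0.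
Qed.

Lemma one_neq0 : (1 : H) != 0. Proof. exact: oner_neq0. Qed.

Lemma offdiag0 n (M : 'M[H]_n) (d : 'rV[H]_n) :
  M *m diag_mx d = 1%:M -> forall i k, i != k -> M i k = 0.
Proof.
move=> hMD i k ik.
move/matrixP: (hMD) => /(_ i k) e1; move/matrixP: (hMD) => /(_ k k) e2.
have ik2 : (i == k) = false by exact: negbTE.
move: e1 e2; rewrite mul_mx_diag !mxE eqxx ik2 => e1 e2.
case: (qmul_eq0 e1) => // e3.
by move: e2; rewrite e3 mulr0 => /esym/eqP; rewrite oner_eq0.
Qed.

End Main.

Theorem mainTheorem3 (R : realType) (n p : nat) (hp : (0 < p)%N)
    (T : tensor R n p n) (A1inv : 'M[quat R]_n)
    (hinv : mx_inverse_of (frontal_slice T (Ordinal hp)) A1inv) :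
  tensor_rank_is T n <->
  exists P Pinv : 'M[quat R]_n,
    mx_inverse_of P Pinv /\
    forall j : 'I_p, j != Ordinal hp ->
      is_diag_mx (Pinv *m (frontal_slice T j *m A1inv) *m P).
Proof.
set j1 := Ordinal hp.
case: hinv => h1 h2.
split.
- case=> hsum _.
  have [X [d [Y hXY]]] := decomp hsum.
  have hA1 := hXY j1.
  set Pinv := diag_mx (d j1) *m Y *m A1inv.
  have hXP : X *m Pinv = 1%:M by rewrite /Pinv !mulmxA -hA1 h1.
  have hPX := inv_sym hXP.
  set M := Y *m A1inv *m X.
  have hDM : diag_mx (d j1) *m M = 1%:M by rewrite -hPX /Pinv /M !mulmxA.
  have hMD := inv_sym hDM.
  have Mdiag := offdiag0 hMD.
  exists X, Pinv; split => // j _.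
  rewrite hXY.
  have -> : Pinv *m (X *m diag_mx (d j) *m Y *m A1inv) *m X = diag_mx (d j) *m M.
    by rewrite /M !mulmxA hPX mul1mx.
  by apply/is_diag_mxP => i k ik; rewrite mul_diag_mx mxE Mdiag // mulr0.
- case=> P [Pinv [[hPPi hPiP] hd]].
  pose D j := Pinv *m (frontal_slice T j *m A1inv) *m P.
  have hD1 : D j1 = 1%:M by rewrite /D h1 mulmx1 hPiP.
  have hDd : forall j, is_diag_mx (D j).
    move=> j; case: (eqVneq j j1) => [->|/hd //]; rewrite hD1.
    apply/is_diag_mxP => i k ik; rewrite mxE (_ : (i == k) = false) //.
    by apply/eqP => e; rewrite e eqxx in ik.
  pose Q := Pinv *m frontal_slice T j1.
  have hA : forall j, frontal_slice T j = P *m D j *m Q.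
    move=> j; rewrite /D /Q !mulmxA hPPi mul1mx.
    rewrite -(mulmxA _ P Pinv) hPPi mulmx1 -mulmxA h2 mulmx1 //.
  have hQ : Q *m (A1inv *m P) = 1%:M by rewrite /Q !mulmxA -(mulmxA Pinv) h1 mulmx1 hPiP.
  split.
  + exists (fun l i j k => P i l * D j l l * Q l k); split.
    * move=> l; split; last by exists (fun i => P i l), (fun j => D j l l), (fun k => Q l k).
      case: (boolP [exists i, P i l != 0]) => [/existsP [i hi]|/existsPn hP]; last first.
        move/matrixP: (hPiP) => /(_ l l).
        rewrite !mxE eqxx big1 => [/eqP|t _]; first by rewrite eq_sym oner_eq0.
        by move: (hP t); rewrite negbK => /eqP ->; rewrite mulr0.
      case: (boolP [exists k, Q l k != 0]) => [/existsP [k hk]|/existsPn hQ0]; last first.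
        move/matrixP: (hQ) => /(_ l l).
        rewrite !mxE eqxx big1 => [/eqP|t _]; first by rewrite eq_sym oner_eq0.
        by move: (hQ0 t); rewrite negbK => /eqP ->; rewrite mul0r.
      exists i, j1, k; rewrite hD1 mxE eqxx mulr1.
      apply/eqP => /qmul_eq0 [] /eqP; by [rewrite (negbTE hi)| rewrite (negbTE hk)].
    * move=> i j k.
      have := hA j; move/matrixP/(_ i k); rewrite /frontal_slice mxE => ->.
      rewrite mxE; apply: eq_bigr => l _; rewrite mul_diag_entry //.
  + move=> m mn hS.
    have [X [d [Y hXY]]] := decomp hS.
    apply: (@no_small R n m X (diag_mx (d j1) *m Y *m A1inv) mn).
    by rewrite !mulmxA -hXY h1.
Qed.
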